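(* Let $C<0$, $a\in\mathbb R$, and $\psi(x)=a+\frac12C|x|^2$ on $\mathbb R^3$. Let $T\subset\mathbb R^3$ be an embedded torus of revolution about the $Z$-axis which is a shrinker, $\vec H=C\,F^\perp$ ($F$ the position vector), and is invariant under $z\mapsto -z$; write $T=E\times_\rho S^1$, where $E$ is the generating simple closed curve in the $XZ$-plane (not meeting the $Z$-axis), parametrized by arc length $s$, and $\rho>0$ is the distance to the $Z$-axis. Let $\lambda_0=0<\lambda_1=\lambda_2=1<\dots<\lambda_{2k-1}=\lambda_{2k}=k^2<\dots$ be the eigenvalues of the Laplacian on $S^1$, and for each $i$ let $L^\psi_{\lambda_i}u=u''+\left(\frac{\rho'}{\rho}+\psi'\right)u'-\frac{\lambda_i}{\rho^2}u$ on $E$, a self-adjoint operator on $L^2(E,\rho e^\psi ds)$ whose eigenvalues (i.e. numbers $\mu$ with $L^\psi_{\lambda_i}\phi=-\mu\phi$) are $\mu_0^{\lambda_i}\le\mu_1^{\lambda_i}\le\mu_2^{\lambda_i}\le\dots$. Then $$\inf\{\mu_j^{\lambda_i}\neq0:\ i,j=0,1,2,\dots\}=\min\{\mu_1^{\lambda_0},\mu_2^{\lambda_0},\mu_0^{\lambda_1}\},$$ and if this minimum equals $\mu_0^{\lambda_1}$, then $\mu_0^{\lambda_1}=-C$.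
   Context: Here $\psi$ restricted to $E$ is regarded as a function of $s$ and primes denote $d/ds$. The numbers $\mu_j^{\lambda_i}$ are exactly the eigenvalues of the $\psi$-Laplacian $\Delta_\psi f=\Delta f+\langle\nabla\psi,\nabla f\rangle$ of $T$ with its induced metric and density. *)

(* Defs.v *)
From Stdlib Require Import Reals Lra.
From Coquelicot Require Import Coquelicot.
Open Scope R_scope.

Definition R3 := (R * R * R)%type.
Definition v3 (x y z : R) : R3 := (x, y, z).
Definition vx (v : R3) : R := fst (fst v).
Definition vy (v : R3) : R := snd (fst v).
Definition vz (v : R3) : R := snd v.
Definition vadd (u v : R3) : R3 := v3 (vx u + vx v) (vy u + vy v) (vz u + vz v).
Definition vscal (c : R) (v : R3) : R3 := v3 (c * vx v) (c * vy v) (c * vz v).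
Definition vdot (u v : R3) : R := vx u * vx v + vy u * vy v + vz u * vz v.
Definition vcross (u v : R3) : R3 :=
  v3 (vy u * vz v - vz u * vy v) (vz u * vx v - vx u * vz v) (vx u * vy v - vy u * vx v).

Definition d3 (f : R -> R3) (x : R) : R3 :=
  v3 (Derive (fun u => vx (f u)) x) (Derive (fun u => vy (f u)) x)
     (Derive (fun u => vz (f u)) x).

Definition Xs (X : R -> R -> R3) s t := d3 (fun u => X u t) s.
Definition Xt (X : R -> R -> R3) s t := d3 (fun u => X s u) t.
Definition Xss X s t := d3 (fun u => Xs X u t) s.
Definition Xst X s t := d3 (fun u => Xt X u t) s.
Definition Xtt X s t := d3 (fun u => Xt X s u) t.

Definition unormal X s t : R3 :=
  let n := vcross (Xs X s t) (Xt X s t) in vscal (/ sqrt (vdot n n)) n.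
Definition nproj X s t (v : R3) : R3 :=
  vscal (vdot v (unormal X s t)) (unormal X s t).

(** Mean curvature vector  H = (g^{ij} X_ij)^perp  of an immersed surface. *)
Definition meancurv X s t : R3 :=
  let g11 := vdot (Xs X s t) (Xs X s t) in
  let g12 := vdot (Xs X s t) (Xt X s t) in
  let g22 := vdot (Xt X s t) (Xt X s t) in
  let D := g11 * g22 - g12 * g12 in
  nproj X s t
    (vadd (vscal (g22 / D) (Xss X s t))
      (vadd (vscal (2 * (- g12 / D)) (Xst X s t)) (vscal (g11 / D) (Xtt X s t)))).

Definition revsurf (r z : R -> R) (s th : R) : R3 :=
  v3 (r s * cos th) (r s * sin th) (z s).

Definition psiE (a C : R) (r z : R -> R) (s : R) : R :=
  a + / 2 * C * (r s ^ 2 + z s ^ 2).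

(** The operator L^psi_lambda on E (rho = r). *)
Definition Lop (a C : R) (r z : R -> R) (lam : R) (u : R -> R) (s : R) : R :=
  Derive (Derive u) s
  + (Derive r s / r s + Derive (psiE a C r z) s) * Derive u s
  - lam / (r s ^ 2) * u s.

(** phi is an eigenfunction of L_lam with eigenvalue mu (L phi = - mu phi),
    phi a nonzero C^2 function on the closed curve E (Lc-periodic in s). *)
Definition eigpair (a C : R) (r z : R -> R) (Lc lam mu : R) (phi : R -> R) : Prop :=
  (forall s, phi (s + Lc) = phi s) /\
  (forall s, ex_derive phi s /\ ex_derive (Derive phi) s) /\
  (exists s, phi s <> 0) /\
  (forall s, Lop a C r z lam phi s = - mu * phi s).

Fixpoint sumk (n : nat) (f : nat -> R) : R :=
  match n with O => 0 | S m => sumk m f + f m end.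

Definition lin_indep (n : nat) (phi : nat -> R -> R) : Prop :=
  forall c : nat -> R, (forall s, sumk n (fun k => c k * phi k s) = 0) ->
    forall k, (k < n)%nat -> c k = 0.

(** There are at least n eigenvalues <= t, counted with multiplicity. *)
Definition cnt_ge a C r z Lc (lam t : R) (n : nat) : Prop :=
  exists (phi : nat -> R -> R) (mu : nat -> R),
    (forall k, (k < n)%nat -> eigpair a C r z Lc lam (mu k) (phi k) /\ mu k <= t) /\
    lin_indep n phi.

(** mu_j^lam : the j-th eigenvalue (from 0, repeated with multiplicity). *)
Definition mu_ev a C r z Lc (j : nat) (lam : R) : Rbar :=
  Glb_Rbar (fun t => cnt_ge a C r z Lc lam t (S j)).

(** Eigenvalues of the Laplacian on S^1: 0, 1, 1, 4, 4, 9, 9, ... *)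
Definition lamS1 (i : nat) : R := (INR (Nat.div (S i) 2)) ^ 2.

(* Main.v *)
Require Import Defs.
From Stdlib Require Import Reals Lra Lia ZArith.
From Coquelicot Require Import Coquelicot.
Open Scope R_scope.

Lemma ex_cont (f : R -> R) x : ex_derive f x -> continuity_pt f x.
Proof. intro H. apply continuity_pt_filterlim. apply (ex_derive_continuous f x H). Qed.

Lemma per_nat (f : R -> R) L : (forall s, f (s + L) = f s) ->
  forall n s, f (s + INR n * L) = f s.
Proof.
  intros H n; induction n; intro s.
  - simpl. f_equal. ring.
  - rewrite S_INR. replace (s + (INR n + 1) * L) with ((s + INR n * L) + L) by ring.
    rewrite H. apply IHn.
Qed.

Lemma per_Z (f : R -> R) L : (forall s, f (s + L) = f s) ->
  forall k s, f (s + IZR k * L) = f s.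
Proof.
  intros H k s. destruct k as [|p|p].
  - f_equal. simpl. ring.
  - rewrite <- positive_nat_Z, <- INR_IZR_INZ. apply per_nat; auto.
  - rewrite <- Pos2Z.opp_pos, opp_IZR, <- positive_nat_Z, <- INR_IZR_INZ.
    rewrite <- (per_nat f L H (Pos.to_nat p) (s + - INR (Pos.to_nat p) * L)).
    f_equal. ring.
Qed.

Lemma per_red (f : R -> R) L : 0 < L -> (forall s, f (s + L) = f s) ->
  forall s, exists s', 0 <= s' <= L /\ f s = f s'.
Proof.
  intros HL H s. destruct (base_Int_part (s / L)) as [H1 H2].
  set (k := Int_part (s / L)) in *.
  exists (s + IZR (- k) * L). split.
  - rewrite opp_IZR.
    assert (IZR k * L <= s / L * L) by (apply Rmult_le_compat_r; lra).
    assert (s / L * L < (IZR k + 1) * L) by (apply Rmult_lt_compat_r; lra).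
    replace (s / L * L) with s in * by (field; lra). split; nra.
  - symmetry. apply per_Z; auto.
Qed.

Lemma per_max (f : R -> R) L : 0 < L -> (forall s, f (s + L) = f s) ->
  (forall s, continuity_pt f s) ->
  exists s0, 0 <= s0 <= L /\ forall s, f s <= f s0.
Proof.
  intros HL H Hc. destruct (continuity_ab_maj f 0 L) as [M [HM1 HM2]]; try lra.
  { intros; apply Hc. }
  exists M; split; auto. intro s. destruct (per_red f L HL H s) as [s' [Hs' ->]]. auto.
Qed.

Lemma per_min (f : R -> R) L : 0 < L -> (forall s, f (s + L) = f s) ->
  (forall s, continuity_pt f s) ->
  exists s0, 0 <= s0 <= L /\ forall s, f s0 <= f s.
Proof.
  intros HL H Hc. destruct (continuity_ab_min f 0 L) as [M [HM1 HM2]]; try lra.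
  { intros; apply Hc. }
  exists M; split; auto. intro s. destruct (per_red f L HL H s) as [s' [Hs' ->]]. auto.
Qed.

Lemma max_d1 (f : R -> R) s0 : ex_derive f s0 -> (forall s, f s <= f s0) -> Derive f s0 = 0.
Proof.
  intros Hd Hm. rewrite <- (Derive_Reals f s0 (ex_derive_Reals_0 f s0 Hd)).
  apply (deriv_maximum f (s0 - 1) (s0 + 1)); try lra. intros; auto.
Qed.

Lemma max_d2 (f : R -> R) s0 : (forall s, ex_derive f s) -> ex_derive (Derive f) s0 ->
  (forall s, f s <= f s0) -> Derive (Derive f) s0 <= 0.
Proof.
  intros Hd Hd2 Hm. assert (H0 := max_d1 f s0 (Hd s0) Hm).
  destruct (Rle_or_lt (Derive (Derive f) s0) 0) as [hh|hh]; auto. exfalso.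
  set (d := Derive (Derive f) s0) in *.
  assert (Hl : derivable_pt_lim (Derive f) s0 d).
  { apply is_derive_Reals. apply Derive_correct; auto. }
  destruct (Hl (d/2)) as [del Hdel]; [lra|].
  assert (Hpos : forall h, 0 < h < del -> 0 < Derive f (s0 + h)).
  { intros h Hh. assert (h <> 0) by lra. assert (Rabs h < del) by (rewrite Rabs_right; lra).
    specialize (Hdel h H H1). rewrite H0 in Hdel.
    apply Rabs_def2 in Hdel. destruct Hdel as [_ Hd'].
    assert (0 < (Derive f (s0 + h) - 0) / h) by lra.
    unfold Rdiv in H2. replace (Derive f (s0 + h) - 0) with (Derive f (s0+h)) in H2 by ring.
    apply Rmult_lt_reg_r with (/ h). apply Rinv_0_lt_compat; lra. lra. }
  pose proof (cond_pos del) as Hdp.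
  destruct (MVT_cor2 f (Derive f) s0 (s0 + del/2)) as [c [Hc1 Hc2]]; [lra| |].
  { intros c _. apply is_derive_Reals, Derive_correct, Hd. }
  assert (0 < Derive f c).
  { replace c with (s0 + (c - s0)) by ring. apply Hpos; lra. }
  specialize (Hm (s0 + del/2)). nra.
Qed.

Lemma bound_mvt (f : R -> R) a b B : a <= b -> (forall x, a <= x <= b -> ex_derive f x) ->
  (forall x, a <= x <= b -> Rabs (Derive f x) <= B) -> Rabs (f b - f a) <= B * (b - a).
Proof.
  intros Hab Hd HB. destruct (Req_dec a b) as [->|Hne].
  - replace (f b - f b) with 0 by ring. rewrite Rabs_R0. lra.
  - destruct (MVT_cor2 f (Derive f) a b) as [c [Hc1 Hc2]]; [lra| |].
    { intros c Hc. apply is_derive_Reals, Derive_correct, Hd; auto. }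
    rewrite Hc1, Rabs_mult, (Rabs_right (b - a)) by lra.
    apply Rmult_le_compat_r; [lra|]. apply HB; lra.
Qed.

Lemma bound_mvt_abs (f : R -> R) a b B : 0 <= B ->
  (forall x, Rmin a b <= x <= Rmax a b -> ex_derive f x) ->
  (forall x, Rmin a b <= x <= Rmax a b -> Rabs (Derive f x) <= B) -> Rabs (f b - f a) <= B * Rabs (b - a).
Proof.
  intros HB0 Hd HB. destruct (Rle_or_lt a b) as [h|h].
  - rewrite Rmin_left, Rmax_right in * by lra. rewrite (Rabs_right (b - a)) by lra. apply bound_mvt; auto.
  - rewrite Rmin_right, Rmax_left in * by lra.
    rewrite (Rabs_minus_sym (f b)), (Rabs_minus_sym b a), (Rabs_right (a - b)) by lra.
    apply bound_mvt; auto; lra.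
Qed.

Lemma deriv0_const (f : R -> R) : (forall x, ex_derive f x) -> (forall x, Derive f x = 0) ->
  forall x y, f x = f y.
Proof.
  intros Hd H0 x y. assert (Rabs (f y - f x) <= 0 * Rabs (y - x)).
  { apply bound_mvt_abs; auto; try lra. intros; rewrite H0, Rabs_R0; lra. }
  rewrite Rmult_0_l in H. pose proof (Rabs_pos (f y - f x)).
  assert (Rabs (f y - f x) = 0) by lra. apply Rabs_eq_0 in H2. lra.
Qed.

Lemma per_max2 (f : R -> R) L : 0 < L -> (forall s, f (s + L) = f s) ->
  (forall s, ex_derive f s) -> (forall s, ex_derive (Derive f) s) ->
  exists s0, 0 <= s0 <= L /\ (forall s, f s <= f s0) /\ Derive f s0 = 0 /\ Derive (Derive f) s0 <= 0.
Proof.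
  intros HL Hp Hd Hd2. destruct (per_max f L HL Hp) as [s0 [H1 H2]].
  { intro; apply ex_cont; auto. }
  exists s0; repeat split; try lra; auto. apply max_d1; auto. apply max_d2; auto.
Qed.

Lemma per_min2 (f : R -> R) L : 0 < L -> (forall s, f (s + L) = f s) ->
  (forall s, ex_derive f s) -> (forall s, ex_derive (Derive f) s) ->
  exists s0, 0 <= s0 <= L /\ (forall s, f s0 <= f s) /\ Derive f s0 = 0 /\ 0 <= Derive (Derive f) s0.
Proof.
  intros HL Hp Hd Hd2.
  assert (E1 : forall x, Derive (fun u => - f u) x = - Derive f x) by (intro; apply Derive_opp).
  assert (E2 : forall x, Derive (Derive (fun u => - f u)) x = - Derive (Derive f) x).
  { intro x. rewrite (Derive_ext _ _ x E1). apply Derive_opp. }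
  destruct (per_max2 (fun u => - f u) L HL) as [s0 [H1 [H2 [H3 H4]]]].
  - intro s; rewrite Hp; auto.
  - intro s; auto_derive; auto.
  - intro s. apply (ex_derive_ext (fun x => - Derive f x)). intro; rewrite E1; auto.
    auto_derive; auto.
  - exists s0; repeat split; try lra.
    + intro s; specialize (H2 s); simpl in H2; lra.
    + rewrite E1 in H3; lra.
    + rewrite E2 in H4; lra.
Qed.


Section G.
Variables (r z : R -> R).
Hypothesis Hr : forall n s, ex_derive_n r n s.
Hypothesis Hz : forall n s, ex_derive_n z n s.
Ltac fin3 := match goal with |- (?a,?b,?c) = (?d,?e,?f) =>
  replace a with d by (first [reflexivity | ring]);
  replace b with e by (first [reflexivity | ring]);
  replace c with f by (first [reflexivity | ring]); reflexivity end.
Lemma dr1 s : ex_derive r s. Proof. exact (Hr 1 s). Qed.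
Lemma dz1 s : ex_derive z s. Proof. exact (Hz 1 s). Qed.
Lemma dr2 s : ex_derive (Derive r) s. Proof. exact (Hr 2 s). Qed.
Lemma dz2 s : ex_derive (Derive z) s. Proof. exact (Hz 2 s). Qed.

Lemma D_mulc (f : R -> R) k s : ex_derive f s -> Derive (fun u => f u * k) s = Derive f s * k.
Proof. intro H. apply is_derive_unique. auto_derive; auto. rewrite Rmult_1_l. reflexivity. Qed.

Lemma Xs0 s : Xs (revsurf r z) s 0 = v3 (Derive r s) 0 (Derive z s).
Proof.
  unfold Xs, d3, revsurf, vx, vy, vz, v3; simpl.
  rewrite !D_mulc by apply dr1. rewrite cos_0, sin_0. fin3.
Qed.

Lemma Dcos k u : Derive (fun v => k * cos v) u = - k * sin u.
Proof. apply is_derive_unique. auto_derive; auto. ring. Qed.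
Lemma Dsin k u : Derive (fun v => k * sin v) u = k * cos u.
Proof. apply is_derive_unique. auto_derive; auto. ring. Qed.
Lemma Dcst (k : R) u : Derive (fun v : R => k) u = 0.
Proof. apply Derive_const. Qed.

Lemma Xt0 s : Xt (revsurf r z) s 0 = v3 0 (r s) 0.
Proof.
  unfold Xt, d3, revsurf, vx, vy, vz, v3; simpl.
  rewrite Dcos, Dsin, Dcst, cos_0, sin_0. fin3.
Qed.

Lemma Xtt0 s : Xtt (revsurf r z) s 0 = v3 (- r s) 0 0.
Proof.
  unfold Xtt, Xt, d3, revsurf, vx, vy, vz, v3; simpl.
  rewrite (Derive_ext _ (fun u => - r s * sin u)) by (intro; apply Dcos).
  rewrite (Derive_ext (fun u => Derive (fun v => r s * sin v) u) (fun u => r s * cos u)) by (intro; apply Dsin).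
  rewrite (Derive_ext (fun u => Derive (fun v => z s) u) (fun u => 0)) by (intro; apply Dcst).
  rewrite Dsin, Dcos, Dcst, cos_0, sin_0. fin3.
Qed.

Lemma Xss0 s : Xss (revsurf r z) s 0 = v3 (Derive (Derive r) s) 0 (Derive (Derive z) s).
Proof.
  unfold Xss, Xs, d3, revsurf, vx, vy, vz, v3; simpl.
  rewrite (Derive_ext (fun u => Derive (fun v => r v * cos 0) u) (fun u => Derive r u * cos 0))
    by (intro; apply D_mulc, dr1).
  rewrite (Derive_ext (fun u => Derive (fun v => r v * sin 0) u) (fun u => Derive r u * sin 0))
    by (intro; apply D_mulc, dr1).
  rewrite !D_mulc by apply dr2. rewrite cos_0, sin_0. fin3.
Qed.

Lemma Xst0 s : Xst (revsurf r z) s 0 = v3 0 (Derive r s) 0.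
Proof.
  unfold Xst, Xt, d3, revsurf, vx, vy, vz, v3; simpl.
  rewrite (Derive_ext (fun u => Derive (fun v => r u * cos v) 0) (fun u => 0))
    by (intro; rewrite Dcos, sin_0; ring).
  rewrite (Derive_ext (fun u => Derive (fun v => r u * sin v) 0) (fun u => r u))
    by (intro; rewrite Dsin, cos_0; ring).
  rewrite (Derive_ext (fun u => Derive (fun v => z u) 0) (fun u => 0)) by (intro; apply Dcst).
  rewrite Dcst. reflexivity.
Qed.
End G.

Lemma shrink_scalar (C : R) r z s :
  (forall n s, ex_derive_n r n s) -> (forall n s, ex_derive_n z n s) ->
  (forall s, Derive r s ^ 2 + Derive z s ^ 2 = 1) -> (forall s, 0 < r s) ->
  (forall s th, meancurv (revsurf r z) s th =
                nproj (revsurf r z) s th (vscal C (revsurf r z s th))) ->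
  Derive r s * Derive (Derive z) s - Derive z s * (Derive (Derive r) s - / r s)
  = C * (Derive r s * z s - Derive z s * r s).
Proof.
  intros Hr Hz Hu Hp Hs. specialize (Hs s 0). pose proof (Hu s) as Hus. pose proof (Hp s) as Hps.
  unfold meancurv, nproj, unormal in Hs. cbv zeta in Hs.
  rewrite (Xs0 r z Hr), (Xt0 r z), (Xss0 r z Hr), (Xst0 r z), (Xtt0 r z) in Hs.
  unfold vdot, vcross, vscal, vadd, vx, vy, vz, v3, revsurf in Hs. simpl in Hs.
  set (p := Derive r s) in *. set (q := Derive z s) in *. set (P := Derive (Derive r) s) in *.
  set (Q := Derive (Derive z) s) in *. set (rho := r s) in *. set (Z := z s) in *.
  match type of Hs with context [sqrt ?x] =>
    assert (Hq : sqrt x = rho); [replace x with (rho * rho) by (rewrite <- (Rmult_1_r (rho*rho)), <- Hus; ring);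
      apply sqrt_square; lra | rewrite Hq in Hs] end.
  injection Hs as H1 H2 H3.
  assert (E : forall A B : R, A * (/rho * (0*0 - q*rho)) = B * (/rho*(0*0 - q*rho)) ->
     A*(/rho*(p*rho - 0*0)) = B * (/rho*(p*rho - 0*0)) -> A = B).
  { intros A B E1 E2. replace (/rho * (0*0 - q*rho)) with (-q) in E1 by (field; lra).
    replace (/rho * (p*rho - 0*0)) with p in E2 by (field; lra).
    replace A with (A * (p^2+q^2)) by (rewrite Hus; ring).
    replace B with (B * (p^2+q^2)) by (rewrite Hus; ring).
    replace (A*(p^2+q^2)) with (p*(A*p) + (-q)*(A*(-q))) by ring. rewrite E1, E2. ring. }
  pose proof (E _ _ H1 H3) as Heq. clear E H1 H2 H3.
  replace (p*p + 0*0 + q*q) with 1 in Heq by (rewrite <- Hus; ring).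
  match type of Heq with ?A = ?B => transitivity A end. - field. lra. - rewrite Heq, cos_0, sin_0. field. lra.
Qed.


Ltac eta := repeat match goal with |- context [fun x : R => ?f x] => change (fun x : R => f x) with f end.
Lemma Dpsi a C r z s : ex_derive r s -> ex_derive z s ->
  Derive (psiE a C r z) s = C * (r s * Derive r s + z s * Derive z s).
Proof. intros H1 H2. apply is_derive_unique. unfold psiE. auto_derive; auto. eta. field. Qed.

Lemma expsi_ex a C r z s : ex_derive r s -> ex_derive z s -> ex_derive (psiE a C r z) s.
Proof. intros H1 H2. unfold psiE. auto_derive; auto. Qed.

Lemma unit_d r z s : (forall n s, ex_derive_n r n s) -> (forall n s, ex_derive_n z n s) ->
  (forall s, Derive r s ^ 2 + Derive z s ^ 2 = 1) ->
  Derive r s * Derive (Derive r) s + Derive z s * Derive (Derive z) s = 0.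
Proof.
  intros Hr Hz Hu.
  assert (Derive (fun u => Derive r u ^ 2 + Derive z u ^ 2) s = Derive (fun _ => 1) s).
  { apply Derive_ext. apply Hu. }
  rewrite Derive_const in H.
  assert (Derive (fun u => Derive r u ^ 2 + Derive z u ^ 2) s =
      2 * (Derive r s * Derive (Derive r) s + Derive z s * Derive (Derive z) s)).
  { apply is_derive_unique. auto_derive. split; [apply (Hr 2%nat)|split; [apply (Hz 2%nat)|auto]]. eta. ring. }
  lra.
Qed.

Lemma Lop_r (C a : R) r z :
  (forall n s, ex_derive_n r n s) -> (forall n s, ex_derive_n z n s) ->
  (forall s, Derive r s ^ 2 + Derive z s ^ 2 = 1) -> (forall s, 0 < r s) ->
  (forall s th, meancurv (revsurf r z) s th =
                nproj (revsurf r z) s th (vscal C (revsurf r z s th))) ->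
  forall s, Lop a C r z 1 r s = C * r s.
Proof.
  intros Hr Hz Hu Hp Hs s.
  pose proof (shrink_scalar C r z s Hr Hz Hu Hp Hs) as HB.
  pose proof (unit_d r z s Hr Hz Hu) as HD. pose proof (Hu s) as Hus. pose proof (Hp s) as Hps.
  unfold Lop. rewrite Dpsi by (apply (Hr 1%nat) || apply (Hz 1%nat)).
  set (p := Derive r s) in *. set (q := Derive z s) in *. set (P := Derive (Derive r) s) in *.
  set (Q := Derive (Derive z) s) in *. set (rho := r s) in *. set (Z := z s) in *.
  assert (E : P + (p / rho + C * (rho * p + Z * q)) * p - 1 / rho ^ 2 * rho - C * rho =
    q * (C * (p * Z - q * rho) - (p * Q - q * (P - / rho))) + p * (p * P + q * Q)
    + (p^2 + q^2 - 1) * (1/rho + C * rho - P)) by (field; lra).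
  rewrite <- HB, HD, Hus in E. lra.
Qed.


Section B.
Variables (C a : R) (r z : R -> R) (Lc : R).
Hypothesis HC : C < 0.
Hypothesis HL : 0 < Lc.
Hypothesis Hr : forall n s, ex_derive_n r n s.
Hypothesis Hz : forall n s, ex_derive_n z n s.
Hypothesis Hper : forall s, r (s + Lc) = r s /\ z (s + Lc) = z s.
Hypothesis Hp : forall s, 0 < r s.
Hypothesis HLr : forall s, Lop a C r z 1 r s = C * r s.

Let r1 s : ex_derive r s := Hr 1%nat s.
Let z1 s : ex_derive z s := Hz 1%nat s.
Let r2 s : ex_derive (Derive r) s := Hr 2%nat s.

Definition bb s := Derive r s / r s + Derive (psiE a C r z) s.
Definition ww s := r s * exp (psiE a C r z s).

Lemma ww_pos s : 0 < ww s.
Proof. unfold ww. apply Rmult_lt_0_compat; auto. apply exp_pos. Qed.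

Lemma ww_per s : ww (s + Lc) = ww s.
Proof. unfold ww, psiE. destruct (Hper s) as [-> ->]. reflexivity. Qed.

Lemma ww_der s : is_derive ww s (ww s * bb s).
Proof.
  unfold ww, bb. rewrite Dpsi by auto. unfold psiE. auto_derive.
  - repeat split; auto.
  - eta. replace (r s * (r s * 1) + z s * (z s * 1)) with (r s ^ 2 + z s ^ 2) by ring. field. apply Rgt_not_eq, Hp.
Qed.

Lemma ww_cont s : continuity_pt ww s.
Proof. apply ex_cont. eexists. apply ww_der. Qed.

Lemma g_der (lam : R) (phi : R -> R) : (forall s, ex_derive phi s) -> (forall s, ex_derive (Derive phi) s) ->
  forall s, is_derive (fun u => ww u * Derive phi u) s (ww s * (Lop a C r z lam phi s + lam / r s ^ 2 * phi s)).
Proof.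
  intros H1 H2 s. unfold Lop. fold (bb s).
  apply (is_derive_ext (fun u => ww u * Derive phi u)); [reflexivity|].
  eapply is_derive_ext. { intro; reflexivity. }
  replace (ww s * (Derive (Derive phi) s + bb s * Derive phi s - lam / r s ^ 2 * phi s + lam / r s ^ 2 * phi s))
    with ((ww s * bb s) * Derive phi s + ww s * Derive (Derive phi) s) by ring.
  apply (is_derive_mult ww (Derive phi)); [apply ww_der | apply Derive_correct, H2 | ].
  intros; apply Rmult_comm.
Qed.

Lemma eig_nonneg mu phi : eigpair a C r z Lc 0 mu phi -> 0 <= mu.
Proof.
  intros [Hpe [Hd [[s1 Hs1] HE]]].
  assert (Hd1 : forall s, ex_derive phi s) by (intro; apply Hd).
  assert (Hd2 : forall s, ex_derive (Derive phi) s) by (intro; apply Hd).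
  destruct (Rle_or_lt mu 0) as [Hm|Hm]; [|lra].
  destruct (Rlt_or_le 0 (phi s1)) as [Hpos|Hneg].
  - destruct (per_max2 phi Lc HL Hpe Hd1 Hd2) as [s0 [_ [Hmax [D1 D2]]]].
    specialize (HE s0). unfold Lop in HE. rewrite D1 in HE.
    assert (0 < phi s0) by (specialize (Hmax s1); lra).
    assert (- mu * phi s0 <= 0) by (unfold Rdiv in HE; lra). nra.
  - destruct (per_min2 phi Lc HL Hpe Hd1 Hd2) as [s0 [_ [Hmin [D1 D2]]]].
    specialize (HE s0). unfold Lop in HE. rewrite D1 in HE.
    assert (phi s0 < 0) by (specialize (Hmin s1); lra).
    assert (0 <= - mu * phi s0) by (unfold Rdiv in HE; lra). nra.
Qed.

Lemma eig_ge_C lam mu phi : 1 <= lam -> eigpair a C r z Lc lam mu phi -> - C <= mu.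
Proof.
  intros Hlam [Hpe [Hd [[s1 Hs1] HE]]].
  assert (Hd1 : forall s, ex_derive phi s) by (intro; apply Hd).
  assert (Hd2 : forall s, ex_derive (Derive phi) s) by (intro; apply Hd).
  assert (rn : forall s, r s <> 0) by (intro; apply Rgt_not_eq, Hp).
  set (v := fun s => phi s / r s).
  assert (Hv1 : forall s, ex_derive v s).
  { intro s. unfold v. auto_derive. repeat split; auto. }
  assert (Dv : forall s, Derive v s = (Derive phi s * r s - phi s * Derive r s) / r s ^ 2).
  { intro s. unfold v. apply Derive_div; auto. }
  assert (Hv2 : forall s, ex_derive (Derive v) s).
  { intro s. apply (ex_derive_ext (fun s => (Derive phi s * r s - phi s * Derive r s) / r s ^ 2)).
    { intro; rewrite Dv; reflexivity. }
    auto_derive. repeat split; auto. }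
  assert (Hvp : forall s, v (s + Lc) = v s).
  { intro s. unfold v. rewrite Hpe. destruct (Hper s) as [-> _]. reflexivity. }
  assert (Dphi : forall s, Derive phi s = Derive r s * v s + r s * Derive v s).
  { intro s. rewrite <- Derive_mult by auto. apply Derive_ext. intro t. unfold v. field. auto. }
  assert (DDphi : forall s, Derive (Derive phi) s =
     Derive (Derive r) s * v s + 2 * Derive r s * Derive v s + r s * Derive (Derive v) s).
  { intro s. rewrite (Derive_ext _ _ s Dphi). rewrite Derive_plus, !Derive_mult; auto.
    ring. auto_derive; auto. auto_derive; auto. }
  assert (Key : forall s, r s * Derive (Derive v) s + 2 * Derive r s * Derive v s + bb s * r s * Derive v s
      = - v s * r s * (C + mu) + v s * (lam - 1) / r s).
  { intro s. specialize (HE s). specialize (HLr s). unfold Lop in HE, HLr. fold (bb s) in HE, HLr.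
    rewrite DDphi, Dphi in HE. replace (phi s) with (r s * v s) in HE by (unfold v; field; auto).
    replace (Derive (Derive r) s) with (C * r s - bb s * Derive r s + 1 / r s ^ 2 * r s) in HE by lra.
    match type of HE with ?A = ?B => match goal with |- ?L = ?R =>
      assert (Hx : L - R = A - B) by (field; auto) end end. lra. }
  destruct (Rle_or_lt (- C) mu) as [Hm|Hm]; [lra|exfalso].
  assert (Hv0 : v s1 <> 0) by (unfold v; intro Hc; apply Hs1;
     apply (Rmult_eq_reg_r (/ r s1)); [rewrite Rmult_0_l; exact Hc | apply Rinv_neq_0_compat; auto]).
  destruct (Rlt_or_le 0 (v s1)) as [Hpos|Hneg].
  - destruct (per_max2 v Lc HL Hvp Hv1 Hv2) as [s0 [_ [Hmax [D1 D2]]]].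
    specialize (Key s0). rewrite D1 in Key. specialize (Hp s0).
    assert (0 < v s0) by (specialize (Hmax s1); lra).
    assert (0 <= v s0 * (lam - 1) / r s0) by (unfold Rdiv; apply Rmult_le_pos; [nra | left; apply Rinv_0_lt_compat; lra]).
    assert (r s0 * Derive (Derive v) s0 <= 0) by nra.
    assert (0 < v s0 * r s0) by nra.
    assert (0 < (v s0 * r s0) * - (C + mu)) by nra.
    lra.
  - destruct (per_min2 v Lc HL Hvp Hv1 Hv2) as [s0 [_ [Hmin [D1 D2]]]].
    specialize (Key s0). rewrite D1 in Key. specialize (Hp s0).
    assert (v s0 < 0) by (specialize (Hmin s1); lra).
    assert (v s0 * (lam - 1) / r s0 <= 0) by (unfold Rdiv; apply Rmult_le_0_r; [nra | left; apply Rinv_0_lt_compat; lra]).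
    assert (0 <= r s0 * Derive (Derive v) s0) by nra.
    assert (v s0 * r s0 < 0) by nra.
    assert ((v s0 * r s0) * - (C + mu) < 0) by nra.
    lra.
Qed.

Lemma eig0_const phi : eigpair a C r z Lc 0 0 phi -> forall s t, phi s = phi t.
Proof.
  intros [Hpe [Hd [_ HE]]].
  assert (Hd1 : forall s, ex_derive phi s) by (intro; apply Hd).
  assert (Hd2 : forall s, ex_derive (Derive phi) s) by (intro; apply Hd).
  set (g := fun u => ww u * Derive phi u).
  assert (Hg : forall x, is_derive g x 0).
  { intro x. pose proof (g_der 0 phi Hd1 Hd2 x) as H. rewrite HE in H.
    replace (ww x * (- 0 * phi x + 0 / r x ^ 2 * phi x)) with 0 in H by (field; apply Rgt_not_eq, Hp).
    exact H. }
  assert (Hgc : forall x y, g x = g y).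
  { apply deriv0_const. intro x; eexists; apply Hg. intro x; apply is_derive_unique, Hg. }
  destruct (per_max2 phi Lc HL Hpe Hd1 Hd2) as [s0 [_ [_ [D1 _]]]].
  assert (H0 : forall x, Derive phi x = 0).
  { intro x. specialize (Hgc x s0). unfold g in Hgc. rewrite D1, Rmult_0_r in Hgc.
    pose proof (ww_pos x). apply Rmult_integral in Hgc. destruct Hgc; lra. }
  apply deriv0_const; auto.
Qed.

Lemma gap_core (Wm WM mu : R) phi s0 s1 : 0 < Wm -> (forall x, Wm <= ww x) -> (forall x, ww x <= WM) ->
  0 < mu -> eigpair a C r z Lc 0 mu phi ->
  0 <= s0 <= Lc -> 0 <= s1 <= Lc -> phi s1 = 0 -> Derive phi s0 = 0 ->
  (forall x, Rabs (phi x) <= Rabs (phi s0)) -> 0 < Rabs (phi s0) ->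
  Wm <= WM * mu * Lc ^ 2.
Proof.
  intros HWm HWm' HWM Hmu [Hpe [Hd [_ HE]]] Hs0 Hs1 Hz1 D0 HK HK0.
  assert (Hd1 : forall s, ex_derive phi s) by (intro; apply Hd).
  assert (Hd2 : forall s, ex_derive (Derive phi) s) by (intro; apply Hd).
  set (K := Rabs (phi s0)) in *.
  set (g := fun u => ww u * Derive phi u).
  assert (Hg : forall x, is_derive g x (ww x * (- mu * phi x))).
  { intro x. pose proof (g_der 0 phi Hd1 Hd2 x) as H. rewrite HE in H.
    replace (ww x * (- mu * phi x + 0 / r x ^ 2 * phi x)) with (ww x * (- mu * phi x)) in H
      by (field; apply Rgt_not_eq, Hp).
    exact H. }
  assert (HWM0 : 0 < WM) by (specialize (HWm' 0); specialize (HWM 0); lra).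
  assert (B1 : forall x, Rabs (Derive g x) <= WM * mu * K).
  { intro x. rewrite (is_derive_unique _ _ _ (Hg x)).
    rewrite Rabs_mult, Rabs_mult, Rabs_Ropp, (Rabs_right (ww x)), (Rabs_right mu).
    2: lra. 2: left; apply ww_pos.
    specialize (HK x). specialize (HWM x). pose proof (ww_pos x). pose proof (Rabs_pos (phi x)).
    replace (WM * mu * K) with (WM * (mu * K)) by ring.
    apply Rmult_le_compat; nra. }
  assert (Hgs0 : g s0 = 0) by (unfold g; rewrite D0; ring).
  assert (B2 : forall x, 0 <= x <= Lc -> Rabs (Derive phi x) <= WM * mu * K * Lc / Wm).
  { intros x Hx.
    assert (Hgx : Rabs (g x - g s0) <= WM * mu * K * Rabs (x - s0)).
    { apply bound_mvt_abs. pose proof (Rabs_pos (phi s0)). apply Rmult_le_pos; nra.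
      intros; eexists; apply Hg. intros; apply B1. }
    rewrite Hgs0, Rminus_0_r in Hgx. unfold g in Hgx.
    rewrite Rabs_mult, (Rabs_right (ww x)) in Hgx by (left; apply ww_pos).
    assert (Rabs (x - s0) <= Lc) by (apply Rabs_le; lra).
    assert (WM * mu * K * Rabs (x - s0) <= WM * mu * K * Lc).
    { apply Rmult_le_compat_l; auto. pose proof (Rabs_pos (phi s0)). apply Rmult_le_pos; nra. }
    apply Rmult_le_reg_l with Wm; auto.
    replace (Wm * (WM * mu * K * Lc / Wm)) with (WM * mu * K * Lc) by (field; lra).
    specialize (HWm' x). pose proof (Rabs_pos (Derive phi x)).
    apply Rle_trans with (ww x * Rabs (Derive phi x)); [apply Rmult_le_compat_r|]; lra. }
  assert (Hp01 : Rabs (phi s0 - phi s1) <= WM * mu * K * Lc / Wm * Rabs (s0 - s1)).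
  { apply bound_mvt_abs.
    - apply Rmult_le_pos; [|left; apply Rinv_0_lt_compat; auto].
      pose proof (Rabs_pos (phi s0)). apply Rmult_le_pos; [apply Rmult_le_pos|]; nra.
    - intros; auto.
    - intros x Hx. apply B2. split.
      + apply Rle_trans with (Rmin s1 s0); [apply Rmin_glb|]; lra.
      + apply Rle_trans with (Rmax s1 s0); [|apply Rmax_lub]; lra. }
  rewrite Hz1, Rminus_0_r in Hp01. fold K in Hp01.
  assert (Rabs (s0 - s1) <= Lc) by (apply Rabs_le; lra).
  assert (HK1 : K <= WM * mu * K * Lc / Wm * Lc).
  { eapply Rle_trans; [exact Hp01|]. apply Rmult_le_compat_l; auto.
    apply Rmult_le_pos; [|left; apply Rinv_0_lt_compat; auto].
    apply Rmult_le_pos; [apply Rmult_le_pos|]; nra. }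
  replace (WM * mu * K * Lc / Wm * Lc) with (K * (WM * mu * Lc ^ 2 / Wm)) in HK1 by (field; lra).
  assert (Hf : 1 <= WM * mu * Lc ^ 2 / Wm).
  { apply Rmult_le_reg_l with K; auto. lra. }
  apply Rmult_le_reg_r with (/ Wm). apply Rinv_0_lt_compat; auto.
  rewrite Rinv_r by lra. exact Hf.
Qed.

Lemma eig_gap : exists c, 0 < c /\ forall mu phi, eigpair a C r z Lc 0 mu phi -> 0 < mu -> c <= mu.
Proof.
  destruct (per_max ww Lc HL ww_per ww_cont) as [sM' [_ HWM]].
  destruct (per_min ww Lc HL ww_per ww_cont) as [sm' [_ HWm]].
  set (WM := ww sM') in *. set (Wm := ww sm') in *.
  assert (HWm0 : 0 < Wm) by apply ww_pos.
  assert (HWM0 : 0 < WM) by apply ww_pos.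
  exists (Wm / (WM * Lc ^ 2)). split.
  { apply Rdiv_lt_0_compat; auto. apply Rmult_lt_0_compat; auto. apply pow_lt; auto. }
  intros mu phi Heig Hmu.
  assert (Hfin : Wm <= WM * mu * Lc ^ 2 -> Wm / (WM * Lc ^ 2) <= mu).
  { intro H. assert (0 < WM * Lc ^ 2) by (apply Rmult_lt_0_compat; auto; apply pow_lt; auto).
    apply Rmult_le_reg_r with (WM * Lc ^ 2); auto. replace (Wm / (WM * Lc ^ 2) * (WM * Lc ^ 2)) with Wm
    by (field; split; lra). lra. }
  apply Hfin.
  pose proof Heig as [Hpe [Hd [[s2 Hs2] HE]]].
  assert (Hd1 : forall s, ex_derive phi s) by (intro; apply Hd).
  assert (Hd2 : forall s, ex_derive (Derive phi) s) by (intro; apply Hd).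
  destruct (per_max2 phi Lc HL Hpe Hd1 Hd2) as [sM [HsM [Hmax [D1M D2M]]]].
  destruct (per_min2 phi Lc HL Hpe Hd1 Hd2) as [sm [Hsm [Hmin [D1m D2m]]]].
  assert (PM : 0 <= phi sM).
  { specialize (HE sM). unfold Lop in HE. rewrite D1M in HE.
    assert (- mu * phi sM <= 0) by (unfold Rdiv in HE; lra). nra. }
  assert (Pm : phi sm <= 0).
  { specialize (HE sm). unfold Lop in HE. rewrite D1m in HE.
    assert (0 <= - mu * phi sm) by (unfold Rdiv in HE; lra). nra. }
  assert (Hcont : continuity phi) by (intro; apply ex_cont; auto).
  destruct (IVT_gen phi sm sM 0 Hcont) as [s1 [Hs1 Hz1]].
  { split; [apply Rle_trans with (phi sm); [apply Rmin_l | lra] |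
            apply Rle_trans with (phi sM); [lra | apply Rmax_r]]. }
  assert (Hs1' : 0 <= s1 <= Lc).
  { split. apply Rle_trans with (Rmin sm sM); [apply Rmin_glb|]; lra.
    apply Rle_trans with (Rmax sm sM); [|apply Rmax_lub]; lra. }
  assert (Habs : forall x, Rabs (phi x) <= Rmax (phi sM) (- phi sm)).
  { intro x. specialize (Hmax x). specialize (Hmin x). apply Rabs_le. split.
    - assert (- phi sm <= Rmax (phi sM) (- phi sm)) by apply Rmax_r. lra.
    - assert (phi sM <= Rmax (phi sM) (- phi sm)) by apply Rmax_l. lra. }
  assert (HKp : 0 < Rmax (phi sM) (- phi sm)).
  { specialize (Habs s2). assert (0 < Rabs (phi s2)) by (apply Rabs_pos_lt; auto). lra. }
  destruct (Rle_or_lt (- phi sm) (phi sM)) as [Hc|Hc].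
  - rewrite Rmax_left in Habs, HKp by lra.
    apply (gap_core Wm WM mu phi sM s1); auto.
    + intro x. rewrite (Rabs_right (phi sM)) by lra. auto.
    + rewrite Rabs_right by lra. auto.
  - rewrite Rmax_right in Habs, HKp by lra.
    apply (gap_core Wm WM mu phi sm s1); auto.
    + intro x. rewrite (Rabs_left1 (phi sm)) by lra. auto.
    + rewrite Rabs_left1 by lra. auto.
Qed.

Let E (lam : R) (j : nat) := fun t => cnt_ge a C r z Lc lam t (S j).

Lemma L_lb2 lam j (L : Rbar) : (forall t, cnt_ge a C r z Lc lam t (S j) -> Rbar_le L (Finite t)) ->
  Rbar_le L (mu_ev a C r z Lc j lam).
Proof. intro H. unfold mu_ev. destruct (Glb_Rbar_correct (fun t => cnt_ge a C r z Lc lam t (S j))) as [_ Hg].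
  apply Hg. intros t Ht. apply H; auto. Qed.

Lemma L_ub lam j t : cnt_ge a C r z Lc lam t (S j) -> Rbar_le (mu_ev a C r z Lc j lam) (Finite t).
Proof. intro H. unfold mu_ev. destruct (Glb_Rbar_correct (fun t => cnt_ge a C r z Lc lam t (S j))) as [Hl _].
  apply Hl; auto. Qed.

Lemma L_lb lam j L : (forall mu phi, eigpair a C r z Lc lam mu phi -> L <= mu) ->
  Rbar_le (Finite L) (mu_ev a C r z Lc j lam).
Proof.
  intro H. apply L_lb2. intros t [phi [m [Hk _]]]. destruct (Hk 0%nat (Nat.lt_0_succ j)) as [He Hm].
  simpl. specialize (H _ _ He). lra.
Qed.

Lemma sumk_ext n f g : (forall k, (k < n)%nat -> f k = g k) -> sumk n f = sumk n g.
Proof. induction n; intro H; simpl; auto. rewrite IHn, H; auto. Qed.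

Lemma lin_shrink n phi : lin_indep (S n) phi -> lin_indep n phi.
Proof.
  intros H c Hc k Hk.
  set (c' := fun k => if Nat.eq_dec k n then 0 else c k).
  assert (Hc' : forall k, (k < n)%nat -> c' k = c k).
  { intros k0 Hk0. unfold c'. destruct (Nat.eq_dec k0 n); [lia|auto]. }
  rewrite <- Hc' by auto. apply H; [|lia].
  intro s. simpl. unfold c' at 2. destruct (Nat.eq_dec n n); [|congruence].
  rewrite (sumk_ext n _ (fun k => c k * phi k s)). rewrite Hc. ring.
  intros; rewrite Hc'; auto.
Qed.

Lemma mu_mono lam j : Rbar_le (mu_ev a C r z Lc j lam) (mu_ev a C r z Lc (S j) lam).
Proof.
  apply L_lb2. intros t [phi [m [Hk Hli]]]. apply L_ub.
  exists phi, m. split. intros; apply Hk; lia. apply lin_shrink; auto.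
Qed.

Lemma mu_mono1 lam j : Rbar_le (mu_ev a C r z Lc 1 lam) (mu_ev a C r z Lc (S j) lam).
Proof.
  induction j. destruct (mu_ev a C r z Lc 1 lam); simpl; lra || auto.
  eapply Rbar_le_trans; [apply IHj | apply mu_mono].
Qed.

Lemma lam0 : lamS1 0 = 0.
Proof. unfold lamS1. simpl. ring. Qed.
Lemma lam1 : lamS1 1 = 1.
Proof. unfold lamS1. simpl. ring. Qed.
Lemma lamge i : (1 <= i)%nat -> 1 <= lamS1 i.
Proof.
  intro H. unfold lamS1. assert (H1 : (0 < S i / 2)%nat) by (apply Nat.div_str_pos; lia).
  assert (1 <= INR (S i / 2)) by (change 1 with (INR 1); apply le_INR; lia). nra.
Qed.

Lemma mu01 : mu_ev a C r z Lc 0 (lamS1 1) = Finite (- C).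
Proof.
  rewrite lam1. apply Rbar_le_antisym.
  - apply L_ub. exists (fun _ => r), (fun _ => - C). split.
    + intros k Hk. split; [|lra]. repeat split.
      * intro s; apply Hper.
      * apply r1.
      * apply r2.
      * exists 0. apply Rgt_not_eq, Hp.
      * intro s. rewrite HLr. ring.
    + intros c Hc k Hk. specialize (Hc 0). simpl in Hc.
      assert (k = 0%nat) by lia. subst. pose proof (Hp 0).
      rewrite Rplus_0_l in Hc. apply Rmult_integral in Hc. destruct Hc; lra.
  - apply L_lb. intros mu phi He. apply (eig_ge_C 1 mu phi); auto. lra.
Qed.

Lemma mu00 : mu_ev a C r z Lc 0 (lamS1 0) = Finite 0.
Proof.
  rewrite lam0. apply Rbar_le_antisym.
  - apply L_ub. exists (fun _ _ => 1), (fun _ => 0). split.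
    + intros k Hk. split; [|lra].
      assert (D1 : forall s, Derive (fun _ : R => 1) s = 0) by (intro; apply Derive_const).
      repeat split.
      * eexists; apply is_derive_const.
      * apply (ex_derive_ext (fun _ => 0)). intro; rewrite D1; auto. eexists; apply is_derive_const.
      * exact 0.
      * lra.
      * intro s. unfold Lop. rewrite (Derive_ext _ (fun _ => 0)) by apply D1.
        rewrite D1, Derive_const. field. apply Rgt_not_eq, Hp.
    + intros c Hc k Hk. specialize (Hc 0). simpl in Hc.
      assert (k = 0%nat) by lia. subst. lra.
  - apply L_lb. intros mu phi He. apply (eig_nonneg mu phi); auto.
Qed.

Lemma mu1_gap c : 0 < c -> (forall mu phi, eigpair a C r z Lc 0 mu phi -> 0 < mu -> c <= mu) ->
  Rbar_le (Finite c) (mu_ev a C r z Lc 1 (lamS1 0)).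
Proof.
  intros Hc Hgap. rewrite lam0. apply L_lb2. intros t [phi [m [Hk Hli]]]. simpl.
  destruct (Rle_or_lt c t) as [h|h]; auto. exfalso.
  assert (Hzz : forall k, (k < 2)%nat -> eigpair a C r z Lc 0 0 (phi k)).
  { intros k Hk2. destruct (Hk k Hk2) as [He Hm].
    pose proof (eig_nonneg _ _ He). destruct (Req_dec (m k) 0) as [E0|E0].
    - rewrite E0 in He; auto.
    - assert (c <= m k) by (apply (Hgap _ (phi k)); auto; lra). lra. }
  assert (Hcst : forall k s, (k < 2)%nat -> phi k s = phi k 0).
  { intros k s Hk2. apply (eig0_const (phi k)); auto. }
  set (c' := fun k => match k with 0%nat => phi 1%nat 0 | 1%nat => - phi 0%nat 0 | _ => 0 end).
  assert (H0 := Hli c'). 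
  assert (Hs : forall s, sumk 2 (fun k => c' k * phi k s) = 0).
  { intro s. simpl. rewrite (Hcst 0%nat s), (Hcst 1%nat s) by lia. ring. }
  specialize (H0 Hs 0%nat ltac:(lia)). simpl in H0.
  destruct (Hzz 1%nat ltac:(lia)) as [_ [_ [[s1 Hs1] _]]].
  rewrite (Hcst 1%nat s1) in Hs1 by lia. auto.
Qed.

Lemma le_min (x y w : Rbar) : Rbar_le x y -> Rbar_le x w -> Rbar_le x (Rbar_min y w).
Proof. intros H1 H2. apply Rbar_min_case; auto. Qed.

Lemma main_lemma :
  let mu := mu_ev a C r z Lc in
  let m := Glb_Rbar (fun x => exists i j, mu j (lamS1 i) = Finite x /\ x <> 0) in
  m = Rbar_min (Rbar_min (mu 1%nat (lamS1 0)) (mu 2%nat (lamS1 0))) (mu 0%nat (lamS1 1))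
  /\ (m = mu 0%nat (lamS1 1) -> mu 0%nat (lamS1 1) = Finite (- C)).
Proof.
  intros mu m. split; [|intros _; apply mu01].
  destruct eig_gap as [c [Hc Hgap]]. pose proof (mu1_gap c Hc Hgap) as H1.
  destruct (Glb_Rbar_correct (fun x => exists i j, mu j (lamS1 i) = Finite x /\ x <> 0)) as [Hlb Hg].
  fold m in Hlb, Hg.
  apply Rbar_le_antisym.
  - assert (Hm1 : Rbar_le m (mu 1%nat (lamS1 0))).
    { unfold mu in *. destruct (mu_ev a C r z Lc 1 (lamS1 0)) as [y| |] eqn:Ey; simpl in H1.
      - apply Hlb. exists 0%nat, 1%nat. split; auto. lra.
      - destruct m; simpl; auto.
      - contradiction. }
    apply le_min; [apply le_min|].
    + exact Hm1.
    + eapply Rbar_le_trans; [exact Hm1 | apply mu_mono].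
    + unfold mu. rewrite mu01. apply Hlb. exists 1%nat, 0%nat. split; [apply mu01|lra].
  - apply Hg. intros x [i [j [Hx Hx0]]]. destruct i as [|i'].
    + destruct j as [|j'].
      * unfold mu in Hx. rewrite mu00 in Hx. injection Hx; intro; subst; contradiction.
      * rewrite <- Hx. eapply Rbar_le_trans; [apply Rbar_min_l|].
        eapply Rbar_le_trans; [apply Rbar_min_l|]. apply mu_mono1.
    + eapply Rbar_le_trans; [apply Rbar_min_r|]. unfold mu. rewrite mu01.
      rewrite <- Hx. apply L_lb. intros mu' phi He. apply (eig_ge_C (lamS1 (S i')) mu' phi); auto.
      apply lamge; lia.
Qed.
End B.

Theorem lemma5p3 (C a : R) (r z : R -> R) (Lc : R) :
  C < 0 ->
  0 < Lc ->
  (forall n s, ex_derive_n r n s) -> (forall n s, ex_derive_n z n s) ->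
  (forall s, r (s + Lc) = r s /\ z (s + Lc) = z s) ->
  (forall s, Derive r s ^ 2 + Derive z s ^ 2 = 1) ->
  (forall s t, 0 <= s < Lc -> 0 <= t < Lc -> r s = r t -> z s = z t -> s = t) ->
  (forall s, 0 < r s) ->
  (forall s, exists t, r t = r s /\ z t = - z s) ->
  (forall s th, meancurv (revsurf r z) s th =
                nproj (revsurf r z) s th (vscal C (revsurf r z s th))) ->
  let mu := mu_ev a C r z Lc in
  let m := Glb_Rbar (fun x => exists i j, mu j (lamS1 i) = Finite x /\ x <> 0) in
  m = Rbar_min (Rbar_min (mu 1%nat (lamS1 0)) (mu 2%nat (lamS1 0))) (mu 0%nat (lamS1 1))
  /\ (m = mu 0%nat (lamS1 1) -> mu 0%nat (lamS1 1) = Finite (- C)).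
Proof.
  intros HC HL Hr Hz Hper Hu _ Hp _ Hs.
  apply main_lemma; auto.
  apply Lop_r; auto.
Qed.
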